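(* Let $P$ be a positive, completely labelled causal logic program and $\pi(p)$ a proof of atom $p$ with respect to $P$. Then $\mathrm{graph}(\pi(p))\in T_P\!\uparrow\!h(p)$, where $h=\mathrm{height}(\pi(p))$.
   Context: Causal graphs: reflexively–transitively closed directed graphs on labels; $G\le G'$ iff $G\supseteq G'$; $G*G'=(G\cup G')^*$, $G\cdot G'$ the closure of the graph with vertices $V\cup V'$ and edges $E\cup E'\cup(V\times V')$. Causal values: down-sets of causal graphs; $*$ intersection, $+$ union, $U\cdot U'={\downarrow}\{G\cdot G'\}$; label $l$ denotes ${\downarrow}$ of the graph with only edge $(l,l)$. Positive completely labelled program: rules $l:H\leftarrow B_1,\dots,B_n$ with atoms $B_i$, every rule labelled, labels pairwise distinct. $T_P(I)(p)=\sum\{(I(B_1)*\dots*I(B_n))\cdot t\mid(t:p\leftarrow B_1,\dots,B_n)\in P\}$; $T_P\!\uparrow\!0=$ all atoms $0$, $T_P\!\uparrow\!(k+1)=T_P(T_P\!\uparrow\!k)$. A proof of $p$ is a derivation tree $\frac{\pi(B_1)\cdots\pi(B_n)}{p}(R)$ with $R\in P$ of head $p$ and body $\{B_1,\dots,B_n\}$ (antecedent $\top$ if $n=0$). $\mathrm{graph}(\pi)$ is the reflexive–transitive closure of the graph whose vertices are the labels of all rules used in $\pi$ and which has, for each sub-derivation using a rule labelled $m$ with immediate subproofs whose last rules are labelled $l_i$, the edges $(l_i,m)$. $\mathrm{height}(\pi)=1+\max\{\mathrm{height}(\pi')\mid\pi'\text{ an immediate subproof of }\pi\}$, with height $1$ when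 the antecedent is $\top$. *)

(* Defs.v *)
From Stdlib Require Import List Relations Arith.
Import ListNotations.
Set Implicit Arguments.

Section Causal.
Variables (L : Type) (A : Type).

(* A graph on labels is given by its edge relation; its vertices are the
   labels carrying a self-loop (causal graphs are reflexively closed). *)
Definition graph := L -> L -> Prop.

Definition star (V : L -> Prop) (E : L -> L -> Prop) : graph :=
  fun x y => (x = y /\ V x) \/ clos_trans L E x y.

Definition cgraph (G : graph) : Prop :=
  (forall x y, G x y -> G x x /\ G y y) /\
  (forall x y z, G x y -> G y z -> G x z).

Definition verts (G : graph) : L -> Prop := fun x => G x x.

(* G <= G'  iff  G is a superset of G' *)
Definition gle (G G' : graph) : Prop := forall x y, G' x y -> G x y.

Definition gprod (G G' : graph) : graph :=
  star (fun x => verts G x \/ verts G' x) (fun x y => G x y \/ G' x y).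

Definition gdot (G G' : graph) : graph :=
  star (fun x => verts G x \/ verts G' x)
       (fun x y => G x y \/ G' x y \/ (verts G x /\ verts G' y)).

Definition glab (l : L) : graph := fun x y => x = l /\ y = l.

(* causal values: down-sets of causal graphs, represented as predicates *)
Definition value := graph -> Prop.

Definition downset (U : value) : Prop :=
  (forall G, U G -> cgraph G) /\
  (forall G G', U G' -> cgraph G -> gle G G' -> U G).

Definition down (S : value) : value :=
  fun G => cgraph G /\ exists G', S G' /\ gle G G'.

Definition vzero : value := fun _ => False.
(* 1 = down-set of the empty graph = all causal graphs *)
Definition vone : value := down (fun G => forall x y, ~ G x y).
Definition vlab (l : L) : value := down (fun G => forall x y, G x y <-> glab l x y).
Definition vsum (U U' : value) : value := fun G => U G \/ U' G.
Definition vprod (U U' : value) : value := fun G => U G /\ U' G.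
Definition vdot (U U' : value) : value :=
  down (fun G => exists G1 G2, U G1 /\ U' G2 /\ forall x y, G x y <-> gdot G1 G2 x y).

Record rule := Rule { rlab : L; rhead : A; rbody : list A }.

Definition program := rule -> Prop.

(* completely labelled: every rule labelled (built in), labels pairwise distinct *)
Definition labels_distinct (P : program) : Prop :=
  forall r r', P r -> P r' -> rlab r = rlab r' -> r = r'.

Definition interp := A -> value.

Definition body_val (I : interp) (bs : list A) : value :=
  fold_right (fun b U => vprod (I b) U) vone bs.

Definition TP (P : program) (I : interp) : interp :=
  fun p G => exists r, P r /\ rhead r = p /\ vdot (body_val I (rbody r)) (vlab (rlab r)) G.

Definition TP_iter (P : program) (k : nat) : interp :=
  Nat.iter k (TP P) (fun _ => vzero).

Inductive proof := Node : rule -> list proof -> proof.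

Definition root (pi : proof) : rule := match pi with Node r _ => r end.
Definition concl (pi : proof) : A := rhead (root pi).

Inductive valid (P : program) : proof -> Prop :=
| valid_node r ss : P r -> map concl ss = rbody r -> Forall (valid P) ss ->
                    valid P (Node r ss).

Fixpoint height (pi : proof) : nat :=
  match pi with Node _ ss => S (list_max (map height ss)) end.

Inductive usedlab : proof -> L -> Prop :=
| ul_here r ss : usedlab (Node r ss) (rlab r)
| ul_sub r ss q l : In q ss -> usedlab q l -> usedlab (Node r ss) l.

Inductive pedge : proof -> L -> L -> Prop :=
| pe_here r ss q : In q ss -> pedge (Node r ss) (rlab (root q)) (rlab r)
| pe_sub r ss q x y : In q ss -> pedge q x y -> pedge (Node r ss) x y.

Definition proof_graph (pi : proof) : graph := star (usedlab pi) (pedge pi).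

End Causal.

(* Main.v *)
Require Import Defs.
From Stdlib Require Import List Relations Arith Lia.
Import ListNotations.

Section Pf.
Variables (L A : Type) (P : program L A).

Lemma star_cgraph (V : L -> Prop) (E : L -> L -> Prop) :
  (forall x y, E x y -> V x /\ V y) -> cgraph (star V E).
Proof.
  intros HE.
  assert (Ht : forall x y, clos_trans L E x y -> V x /\ V y).
  { intros x y H; induction H; [apply HE; auto | tauto]. }
  split.
  - intros x y [[-> Hv]|Hc]; [split; left; auto|].
    destruct (Ht _ _ Hc); split; left; auto.
  - intros x y z [[-> Hv]|Hc] [[-> Hv']|Hc'].
    + left; auto.
    + right; auto.
    + right; auto.
    + right; eapply t_trans; eauto.
Qed.

Lemma pedge_used (pi : proof L A) x y : pedge pi x y -> usedlab pi x /\ usedlab pi y.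
Proof.
  induction 1.
  - split; [ destruct q; eapply ul_sub; eauto; constructor | constructor].
  - destruct IHpedge; split; eapply ul_sub; eauto.
Qed.

Lemma pg_cgraph (pi : proof L A) : cgraph (proof_graph pi).
Proof. apply star_cgraph, pedge_used. Qed.

Lemma ct_mono (E E' : L -> L -> Prop) x y :
  (forall a b, E a b -> E' a b) -> clos_trans L E x y -> clos_trans L E' x y.
Proof. intros H C; induction C; [left; auto | eapply t_trans; eauto]. Qed.

Lemma reach_root (pi : proof L A) x : usedlab pi x ->
  x = rlab (root pi) \/ clos_trans L (pedge pi) x (rlab (root pi)).
Proof.
  induction 1; simpl; auto.
  right. assert (He : pedge (Node r ss) (rlab (root q)) (rlab r)) by (constructor; auto).
  destruct IHusedlab as [->|Hc]; [left; auto|].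
  eapply t_trans; [| left; exact He].
  eapply ct_mono; [| exact Hc]. intros; eapply pe_sub; eauto.
Qed.

Lemma TP_down k p (H G : graph L) :
  TP_iter P k p H -> cgraph G -> gle G H -> TP_iter P k p G.
Proof.
  destruct k; unfold TP_iter; simpl; [intros []|]. unfold TP.
  intros [r [Pr [Hh [Hc [G' [HG' Hle]]]]]] Hg Hgl.
  exists r; split; [auto|split; [auto|]]. split; [auto|]. exists G'; split; auto.
  intros x y Hxy; auto.
Qed.

Lemma body_mono (I I' : interp L A) bs G :
  (forall p H, I p H -> I' p H) -> body_val I bs G -> body_val I' bs G.
Proof.
  intros HI; induction bs; simpl; auto.
  intros [H1 H2]; split; auto.
Qed.

Lemma TP_mono (I I' : interp L A) p G :
  (forall p H, I p H -> I' p H) -> TP P I p G -> TP P I' p G.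
Proof.
  unfold TP. intros HI [r [Pr [Hh [Hc [G' [[G1 [G2 [B [V Hiff]]]] Hle]]]]]].
  exists r; split; [auto|split; [auto|]]. split; [auto|]. exists G'; split; auto.
  exists G1, G2; split; [|split]; auto.
  eapply body_mono; eauto.
Qed.

Lemma TP_step k : forall p G, TP_iter P k p G -> TP_iter P (S k) p G.
Proof.
  induction k; unfold TP_iter in *; simpl; [intros p G []|].
  intros p G; apply TP_mono. exact IHk.
Qed.

Lemma TP_le k k' p G : k <= k' -> TP_iter P k p G -> TP_iter P k' p G.
Proof. induction 1; auto. intros; apply TP_step; auto. Qed.

Lemma body_all (I : interp L A) (G : graph L) (ss : list (proof L A)) :
  cgraph G -> (forall q, In q ss -> I (concl q) G) -> body_val I (map (@concl L A) ss) G.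
Proof.
  intros Hg; induction ss; simpl; intros H.
  - split; auto. exists (fun _ _ => False); split; [intros x y F; exact F| intros x y []].
  - split; auto.
Qed.

Lemma vlab_glab (l : L) : vlab l (glab l).
Proof.
  split.
  - split.
    + intros x y [-> ->]; unfold glab; auto.
    + intros x y z [? ?] [? ?]; subst; unfold glab; auto.
  - exists (glab l); split; [intros; tauto| intros x y; auto].
Qed.

Lemma main_n n : forall pi : proof L A, height pi <= n -> valid P pi ->
  TP_iter P (height pi) (concl pi) (proof_graph pi).
Proof.
  induction n; intros [r ss] Hh Hv; simpl in Hh; [lia|].
  inversion Hv; subst.
  set (m := list_max (map (@height L A) ss)).
  assert (Hm : forall q, In q ss -> height q <= m).
  { intros q Hq. assert (Hf := proj1 (list_max_le (map (@height L A) ss) m) (le_n _)).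
    rewrite Forall_forall in Hf. apply Hf, in_map; auto. }
  change (height (Node r ss)) with (S m). unfold TP_iter; simpl; fold (TP_iter P m); unfold TP.
  set (G := proof_graph (Node r ss)).
  assert (HG : cgraph G) by apply pg_cgraph.
  assert (Hr : G (rlab r) (rlab r)) by (left; split; [auto| constructor]).
  exists r; split; [auto|split; [auto|]]. split; [exact HG|].
  exists (gdot G (glab (rlab r))); split.
  - exists G, (glab (rlab r)); split; [|split].
    + rewrite <- H2. apply body_all; auto.
      intros q Hq. rewrite Forall_forall in H3. rename H3 into H4.
      apply TP_le with (k := height q); [apply Hm; auto|].
      eapply TP_down; [apply IHn; [ | apply H4; auto] | auto |].
      * assert (height q <= m) by (apply Hm; auto). unfold m in *; lia.
      * intros x y [[-> Hu]|Hc].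
        -- left; split; auto; eapply ul_sub; eauto.
        -- right; eapply ct_mono; [|exact Hc]; intros; eapply pe_sub; eauto.
    + apply vlab_glab.
    + intros x y; tauto.
  - intros x y [[-> [Hx|[-> _]]]|Hc]; auto.
    induction Hc as [x y [Hxy|[[-> ->]|[Hx [_ ->]]]]|]; auto.
    + destruct Hx as [[_ Hu]|Hc].
      * destruct (reach_root _ _ Hu) as [Ex|Ex]; simpl in Ex; [subst; auto| right; auto].
      * assert (Hu : usedlab (Node r ss) x).
        { apply clos_trans_t1n in Hc; inversion Hc; subst; eapply proj1, pedge_used; eassumption. }
        destruct (reach_root _ _ Hu) as [Ex|Ex]; simpl in Ex; [subst; auto| right; auto].
    + eapply (proj2 HG); eauto.
Qed.

End Pf.

Theorem mainTheorem19 (L A : Type) (P : program L A) :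
  labels_distinct P ->
  forall pi : proof L A, valid P pi ->
  TP_iter P (height pi) (concl pi) (proof_graph pi).
Proof.
  intros _ pi Hv. eapply main_n; eauto.
Qed.
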